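(* Let $R = \mathbb{Z} \times \mathbb{Z}$ with coordinatewise addition and multiplication $(a,b)\cdot(c,d) = (ac, ad+bc)$, and consider the template $(\mathbb{Z}^+ \times \mathbb{N}, \mathbb{N}^2, \mathbb{N}^2)$ in $R$. Let $n \ge 2$ and let $(\alpha_1, \dots, \alpha_n)$ be a list of elements $\alpha_i = (a_i, b_i) \in \mathbb{Z}^+ \times \mathbb{N}$ with $\gcd(a_1, \dots, a_n) = 1$. Then $\mathrm{Frob}(\alpha_1, \dots, \alpha_n)$ is nonempty if and only if $b_i = 0$ for at least one $i$.
   Context: $\mathbb{N}$ denotes the nonnegative integers, $\mathbb{Z}^+ = \mathbb{N}\setminus\{0\}$. For the template above, $MN(\alpha_1, \dots, \alpha_n) = \{\sum_{i=1}^n \alpha_i \lambda_i : \lambda_i \in \mathbb{N}^2\}$ (product in $R$), and $\mathrm{Frob}(\alpha_1, \dots, \alpha_n) = \{w \in R : w + \mathbb{N}^2 \subseteq MN(\alpha_1, \dots, \alpha_n)\}$, where $w + \mathbb{N}^2 = \{w+u : u \in \mathbb{N}^2\}$. *)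

(* Defs.v *)
From mathcomp Require Import all_boot all_order all_algebra.
Set Implicit Arguments. Unset Strict Implicit. Unset Printing Implicit Defensive.
Import Order.TTheory GRing.Theory Num.Theory.
Local Open Scope ring_scope.

Definition R := (int * int)%type.

Definition radd (x y : R) : R := (x.1 + y.1, x.2 + y.2).

Definition rmul (x y : R) : R := (x.1 * y.1, x.1 * y.2 + x.2 * y.1).

Definition rsum (n : nat) (F : 'I_n -> R) : R :=
  (\sum_(i < n) (F i).1, \sum_(i < n) (F i).2).

Definition inN2 (x : R) : Prop := 0 <= x.1 /\ 0 <= x.2.

Definition inZposN (x : R) : Prop := 0 < x.1 /\ 0 <= x.2.

Definition MN (n : nat) (alpha : 'I_n -> R) (v : R) : Prop :=
  exists lam : 'I_n -> R, (forall i, inN2 (lam i)) /\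
    v = rsum (fun i => rmul (alpha i) (lam i)).

Definition Frob (n : nat) (alpha : 'I_n -> R) (w : R) : Prop :=
  forall u : R, inN2 u -> MN alpha (radd w u).

(* Main.v *)
Require Import Defs.
From mathcomp Require Import all_boot all_order all_algebra.
From mathcomp Require Import zify ring.
Import Order.TTheory GRing.Theory Num.Theory.
Local Open Scope ring_scope.

Lemma bezout_big (n : nat) (a : 'I_n -> int) :
  exists u : 'I_n -> int, \sum_(i < n) u i * a i = \big[gcdz/0]_(i < n) a i.
Proof.
elim: n a => [|n IH] a.
  by exists (fun _ => 0); rewrite !big_ord0.
have [u Hu] := IH (fun i => a (lift ord0 i)).
have [s [v Hsv]] := Bezoutz (a ord0) (\big[gcdz/0]_(i < n) a (lift ord0 i)).
exists (fun i => if unlift ord0 i is Some k then v * u k else s).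
rewrite big_ord_recl /= big_ord_recl /= unlift_none -Hsv -Hu.
congr (_ + _); rewrite mulr_sumr; apply: eq_bigr => i _.
by rewrite liftK mulrA.
Qed.

Lemma term_le_sum (n : nat) (F : 'I_n -> int) (j : 'I_n) :
  (forall i, 0 <= F i) -> F j <= \sum_(i < n) F i.
Proof.
move=> H; rewrite (bigD1 j) //= lerDl; apply: sumr_ge0 => i _; exact: H.
Qed.

Definition Sg (n : nat) (a : 'I_n -> int) (m : int) : Prop :=
  exists mu : 'I_n -> int, (forall i, 0 <= mu i) /\ m = \sum_(i < n) a i * mu i.
Arguments Sg {n}.

Lemma conductor (n : nat) (a : 'I_n -> int) :
  (0 < n)%N -> (forall i, 0 < a i) -> \big[gcdz/0]_(i < n) a i = 1 ->
  exists c : int, 0 <= c /\ forall m, c <= m -> Sg a m.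
Proof.
move=> n0 apos hg.
have [u Hu] := bezout_big _ a; rewrite hg in Hu.
pose nn i := Num.max (- u i) 0 + 1.
pose pp i := nn i + u i.
have nn1 : forall i, 1 <= nn i by move=> i; rewrite /nn; lia.
have pp0 : forall i, 0 <= pp i by move=> i; rewrite /pp /nn; lia.
pose Q := \sum_(i < n) a i * nn i.
have HPQ : \sum_(i < n) a i * pp i = Q + 1.
  rewrite -Hu /Q -big_split /=; apply: eq_bigr => i _; rewrite /pp; ring.
have Qpos : 0 < Q.
  pose i0 : 'I_n := Ordinal n0.
  apply: lt_le_trans (term_le_sum _ _ i0 _).
    by have := apos i0; have := nn1 i0; nia.
  by move=> i; have := apos i; have := nn1 i; nia.
exists (Q * Q); split; first nia.
move=> m hm.
pose q := (m %/ Q)%Z; pose r := (m %% Q)%Z.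
have em : m = q * Q + r by exact: divz_eq.
have r0 : 0 <= r by apply: modz_ge0; lia.
have rQ : r < Q by apply: ltz_pmod.
have qQ : Q - 1 < q.
  have : (Q - 1) * Q < q * Q by nia.
  by rewrite ltr_pM2r.
have qr : 0 <= q - r by lia.
exists (fun i => (q - r) * nn i + r * pp i); split.
  by move=> i; have := nn1 i; have := pp0 i; nia.
have -> : \sum_(i < n) a i * ((q - r) * nn i + r * pp i) =
   (q - r) * Q + r * (Q + 1).
  rewrite -HPQ /Q !mulr_sumr -big_split /=; apply: eq_bigr => i _; ring.
rewrite em; ring.
Qed.

Lemma sum_if (n : nat) (F : 'I_n -> int) (j : 'I_n) (k : int) :
  \sum_(i < n) F i * (if i == j then k else 0) = F j * k.
Proof.
rewrite (bigD1 j) //= eqxx big1 ?addr0 // => i /negbTE ->; by rewrite mulr0.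
Qed.

Theorem corollary4p1 (n : nat) (alpha : 'I_n -> R) :
  (2 <= n)%N ->
  (forall i, inZposN (alpha i)) ->
  \big[gcdz/0]_(i < n) (alpha i).1 = 1 ->
  ((exists w : R, Frob alpha w) <-> (exists i : 'I_n, (alpha i).2 = 0)).
Proof.
move=> n2 hpos hg; split.
- case=> w Hw.
  case: (boolP [exists i, (alpha i).2 == 0]) => [/existsP [i /eqP]|]; first by eauto.
  rewrite negb_exists => /forallP hne.
  have b1 : forall i, 1 <= (alpha i).2.
    move=> i; have := hne i; have := (hpos i).2; lia.
  pose A := \sum_(i < n) (alpha i).1.
  have A0 : 0 <= A by apply: sumr_ge0 => i _; have := (hpos i).1; lia.
  have hu : inN2 (A * `|w.2| + `|w.1| + 1, 0).
    rewrite /inN2 /=; split=> //.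
    have := normr_ge0 w.2; have := normr_ge0 w.1; nia.
  have [lam [hl e]] := Hw _ hu.
  rewrite /radd /rsum /= in e; case: e => e1 e2.
  have hle : forall i, (lam i).1 <= w.2.
    move=> i.
    have := term_le_sum _ (fun i => (alpha i).1 * (lam i).2 + (alpha i).2 * (lam i).1) i.
    have Fp : forall i, 0 <= (alpha i).1 * (lam i).2 + (alpha i).2 * (lam i).1.
      move=> i'; have := hl i'; have := hpos i'; rewrite /inN2 /inZposN; nia.
    move=> /(_ Fp); rewrite -e2 addr0 /= => H.
    have := hl i; have := hpos i; have := b1 i; rewrite /inN2 /inZposN; nia.
  have : \sum_(i < n) (alpha i).1 * (lam i).1 <= \sum_(i < n) (alpha i).1 * `|w.2|.
    apply: ler_sum => i _; have := hle i; have := ler_norm w.2;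
    have := hpos i; rewrite /inZposN; nia.
  rewrite -mulr_suml -/A -e1.
  have := ler_norm (- w.1); rewrite normrN; lia.
- case=> j bj0.
  have n0 : (0 < n)%N by apply: leq_trans n2.
  have apos : forall i, 0 < (alpha i).1 by move=> i; case: (hpos i).
  have b0 : forall i, 0 <= (alpha i).2 by move=> i; case: (hpos i).
  have [c [c0 hc]] := conductor _ (fun i => (alpha i).1) n0 apos hg.
  pose Bs := \sum_(i < n) (alpha i).2.
  have Bs0 : 0 <= Bs by apply: sumr_ge0.
  pose aj := (alpha j).1.
  have aj0 : 0 < aj by apply: apos.
  exists (c, c + Bs * (c + aj)).
  move=> [x y] [/= hx hy].
  pose k := (x %/ aj)%Z; pose r := (x %% aj)%Z.
  have ex : x = k * aj + r by exact: divz_eq.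
  have r0 : 0 <= r by apply: modz_ge0; lia.
  have raj : r < aj by apply: ltz_pmod.
  have k0 : 0 <= k by nia.
  have [mu [hmu es]] := hc (c + r) ltac:(lia).
  have bound : \sum_(i < n) (alpha i).2 * mu i <= Bs * (c + r).
    rewrite es mulr_sumr; apply: ler_sum => i _.
    have := term_le_sum _ (fun i => (alpha i).2) i b0.
    rewrite -/Bs /= => hb.
    have hba : (alpha i).2 <= Bs * (alpha i).1 by have := apos i; nia.
    rewrite mulrA; apply: ler_wpM2r; [exact: hmu | exact: hba].
  have [nu [hnu enu]] := hc (c + Bs * (c + aj) + y - \sum_(i < n) (alpha i).2 * mu i) ltac:(nia).
  exists (fun i => (mu i + (if i == j then k else 0), nu i)); split.
    move=> i; rewrite /inN2 /=; split; last exact: hnu.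
    have := hmu i; case: (i == j); lia.
  rewrite /radd /rsum /=; congr pair.
    under eq_bigr do rewrite mulrDr.
    by rewrite big_split /= sum_if -es -/aj ex; ring.
  under eq_bigr do rewrite mulrDr addrA.
  rewrite big_split /= sum_if bj0 mul0r addr0 big_split /= -enu; ring.
Qed.
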